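(* For $c\in\mathbb{R}$ and $c_1\in\mathbb{R}\setminus\{0,-1\}$ consider the Type $\mathcal{A}$ models $\mathcal{M}_1^1=\mathcal{M}(-1,0,1,0,0,2)$, $\mathcal{M}_2^1(c_1)=\mathcal{M}(-1,0,c_1,0,0,1+2c_1)$, $\mathcal{M}_3^1(c_1)=\mathcal{M}(0,0,c_1,0,0,1+2c_1)$, $\mathcal{M}_4^1(c)=\mathcal{M}(0,0,1,0,c,2)$, $\mathcal{M}_5^1(c)=\mathcal{M}(1,0,0,0,1+c^2,2c)$. Their isotropy groups are: (1) $\mathcal{I}(\mathcal{M}_1^1)=\{\mathrm{id}\}$. (2) $\mathcal{I}(\mathcal{M}_2^1(c_1))=\{\mathrm{id}\}$ if $c_1\neq-\frac12$. (3) $\mathcal{I}(\mathcal{M}_2^1(-\frac12))=\{\mathrm{id},T\}$ where $T(x^1,x^2)=(x^1+x^2,-x^2)$. (4) $\mathcal{I}(\mathcal{M}_3^1(c_1))=\{T: T(x^1,x^2)=(v^{-1}x^1,x^2),\ v\in\mathbb{R}\setminus\{0\}\}$. (5) $\mathcal{I}(\mathcal{M}_4^1(c))=\{T:T(x^1,x^2)=(x^1-wx^2,x^2),\ w\in\mathbb{R}\}$ if $c\neq0$. (6) $\mathcal{I}(\mathcal{M}_4^1(0))=\{T:T(x^1,x^2)=(v^{-1}(x^1-wx^2),x^2),\ w\in\mathbb{R},\ v\in\mathbb{R}\setminus\{0\}\}$. (7) $\mathcal{I}(\mathcal{M}_5^1(c))=\{\mathrm{id}\}$ if $c\neq0$.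 (8) $\mathcal{I}(\mathcal{M}_5^1(0))=\{\mathrm{id},T\}$ where $T(x^1,x^2)=(x^1,-x^2)$.
   Context: For $(a,b,c,d,e,f)\in\mathbb{R}^6$, the Type $\mathcal{A}$ model $\mathcal{M}(a,b,c,d,e,f)$ is $(\mathbb{R}^2,\nabla)$ with torsion free connection with constant Christoffel symbols ($\nabla_{\partial_{x^i}}\partial_{x^j}=\Gamma_{ij}{}^k\partial_{x^k}$) $\Gamma_{11}{}^1=a$, $\Gamma_{11}{}^2=b$, $\Gamma_{12}{}^1=\Gamma_{21}{}^1=c$, $\Gamma_{12}{}^2=\Gamma_{21}{}^2=d$, $\Gamma_{22}{}^1=e$, $\Gamma_{22}{}^2=f$. The group $\operatorname{GL}(2,\mathbb{R})$ acts on Type $\mathcal{A}$ models by linear changes of coordinates $T$ (pulling back the connection, which again has constant Christoffel symbols). The isotropy group of a model $\mathcal{M}$ is $\mathcal{I}(\mathcal{M})=\{T\in\operatorname{GL}(2,\mathbb{R}): T^*\mathcal{M}=\mathcal{M}\}$. *)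

(* Defs.v *)
From HB Require Import structures.
From mathcomp Require Import all_boot all_order all_algebra.
From mathcomp Require Import reals.
Set Implicit Arguments. Unset Strict Implicit. Unset Printing Implicit Defensive.
Import Order.TTheory GRing.Theory Num.Theory.
Local Open Scope ring_scope.

(* Christoffel symbols Gamma i j k = Γ_{ij}^k, indices in 'I_2 (0 <-> x^1, 1 <-> x^2). *)
Definition christoffel (R : realType) := 'I_2 -> 'I_2 -> 'I_2 -> R.

(* The Type A model M(a,b,c,d,e,f) (torsion free: Γ_12 = Γ_21). *)
Definition typeA (R : realType) (a b c d e f : R) : christoffel R :=
  fun i j k =>
    let s := (i + j)%N in
    if s == 0%N then (if k == 0 :> nat then a else b)
    else if s == 1%N then (if k == 0 :> nat then c else d)
    else (if k == 0 :> nat then e else f).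

(* The matrix of the linear map T(x^1,x^2) = (p x^1 + q x^2, r x^1 + s x^2). *)
Definition mx2 (R : realType) (p q r s : R) : 'M[R]_2 :=
  \matrix_(i < 2, j < 2)
    if i == 0 :> nat then (if j == 0 :> nat then p else q)
    else (if j == 0 :> nat then r else s).

Definition pullback (R : realType) (A : 'M[R]_2) (G : christoffel R) : christoffel R :=
  fun a b c => \sum_(i < 2) \sum_(j < 2) \sum_(k < 2)
                 invmx A c k * A i a * A j b * G i j k.

Definition isotropy (R : realType) (G : christoffel R) (A : 'M[R]_2) : Prop :=
  A \in unitmx /\ pullback A G = G.

(* Main.v *)
Require Import Defs.
From HB Require Import structures.
From mathcomp Require Import all_boot all_order all_algebra.
From mathcomp Require Import reals.
From mathcomp Require Import boolp ring lra.
Import Order.TTheory GRing.Theory Num.Theory.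
Local Open Scope ring_scope.

Section Aux.
Variable R : realType.

Implicit Types p q r s : R.
Lemma mx2_eta (A : 'M[R]_2) : A = mx2 (A 0 0) (A 0 1) (A 1 0) (A 1 1).
Proof.
apply/matrixP => i j; rewrite !mxE.
case: i => [[|[|//]]] Hi; case: j => [[|[|//]]] Hj /=;
  by congr (A _ _); apply: val_inj.
Qed.

Lemma mx2_eq p q r s p' q' r' s' :
  mx2 p q r s = mx2 p' q' r' s' <-> [/\ p = p', q = q', r = r' & s = s'].
Proof.
split.
- move=> E.
  have := congr1 (fun M : 'M[R]_2 => M 0 0) E;
  have := congr1 (fun M : 'M[R]_2 => M 0 1) E;
  have := congr1 (fun M : 'M[R]_2 => M 1 0) E;
  have := congr1 (fun M : 'M[R]_2 => M 1 1) E.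
  by rewrite !mxE /= => -> -> -> ->.
- by case=> -> -> -> ->.
Qed.

Lemma one_mx2 : (1%:M : 'M[R]_2) = mx2 1 0 0 1.
Proof.
apply/matrixP => i j; rewrite !mxE.
by case: i => [[|[|//]]] Hi; case: j => [[|[|//]]] Hj.
Qed.

Lemma det_mx2 p q r s : \det (mx2 p q r s) = p * s - q * r.
Proof.
rewrite (expand_det_row _ 0) !big_ord_recl big_ord0 /cofactor !det_mx11 !mxE /=.
rewrite /bump /=; ring.
Qed.

Lemma unit_mx2 p q r s : (mx2 p q r s \in unitmx) = (p * s - q * r != 0).
Proof. by rewrite unitmxE det_mx2 unitfE. Qed.

Lemma prod0 {x y : R} : x * y = 0 -> x = 0 \/ y = 0.
Proof. by move/eqP; rewrite mulf_eq0 => /orP[/eqP|/eqP]; auto. Qed.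


Definition Xs (A : 'M[R]_2) (G : christoffel R) a b k :=
  \sum_(i < 2) \sum_(j < 2) A i a * A j b * G i j k.

Lemma pullbackE A G a b c :
  pullback A G a b c = \sum_(k < 2) invmx A c k * Xs A G a b k.
Proof.
rewrite /pullback /Xs.
under eq_bigr => i _ do rewrite exchange_big /=.
rewrite exchange_big /=; apply: eq_bigr => k _.
rewrite mulr_sumr; apply: eq_bigr => i _.
rewrite mulr_sumr; apply: eq_bigr => j _.
by rewrite !mulrA.
Qed.

Lemma key A G : A \in unitmx ->
  (pullback A G = G <-> forall a b k, Xs A G a b k = \sum_(c < 2) A k c * G a b c).
Proof.
move=> uA; split.
- move=> HP a b k.
  have E : (\col_k Xs A G a b k) = A *m (\col_c G a b c).
    have <- : (\col_c pullback A G a b c) = (\col_c G a b c).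
      by rewrite HP.
    have -> : (\col_c pullback A G a b c) = invmx A *m (\col_k Xs A G a b k).
      by apply/matrixP => i j; rewrite !mxE pullbackE; apply: eq_bigr => l _; rewrite mxE.
    by rewrite mulmxA mulmxV // mul1mx.
  have := congr1 (fun M : 'M[R]_(2,1) => M k 0) E; rewrite !mxE => ->.
  by apply: eq_bigr => l _; rewrite mxE.
- move=> HX.
  apply: funext => a.
  apply: funext => b.
  apply: funext => c.
  have E : (\col_k Xs A G a b k) = A *m (\col_c G a b c).
    by apply/matrixP => i j; rewrite !mxE HX; apply: eq_bigr => l _; rewrite mxE.
  rewrite pullbackE.
  have := congr1 (fun M : 'M[R]_(2,1) => (invmx A *m M) c 0) E.
  rewrite mulmxA mulVmx // mul1mx !mxE => <-.
  by apply: eq_bigr => l _; rewrite mxE.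
Qed.

Definition eqs (a b c d e f p q r s : R) : Prop :=
   a * p^+2 + 2 * c * p * r + e * r^+2 = p * a + q * b /\
   b * p^+2 + 2 * d * p * r + f * r^+2 = r * a + s * b /\
   a * p * q + c * (p * s + r * q) + e * r * s = p * c + q * d /\
   b * p * q + d * (p * s + r * q) + f * r * s = r * c + s * d /\
   a * q^+2 + 2 * c * q * s + e * s^+2 = p * e + q * f /\
   b * q^+2 + 2 * d * q * s + f * s^+2 = r * e + s * f.

Lemma eqsE (p q r s a b c d e f : R) :
 (forall i j k, Xs (mx2 p q r s) (typeA a b c d e f) i j k
    = \sum_(l < 2) (mx2 p q r s) k l * typeA a b c d e f i j l) <-> eqs a b c d e f p q r s.
Proof.
have tr (x y x' y' : R) : x - y = x' - y' -> x = y -> x' = y'.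
  by move=> E xy; apply/eqP; rewrite -subr_eq0 -E xy subrr.
rewrite /Xs /eqs; split.
- move=> H.
  have := H 0 0 0; have := H 0 0 1; have := H 0 1 0; have := H 0 1 1;
  have := H 1 1 0; have := H 1 1 1.
  rewrite !big_ord_recl !big_ord0 /typeA /mx2 !mxE /=.
  move=> h1 h2 h3 h4 h5 h6.
  split; first by apply: (tr _ _ _ _ _ h6); ring.
  split; first by apply: (tr _ _ _ _ _ h5); ring.
  split; first by apply: (tr _ _ _ _ _ h4); ring.
  split; first by apply: (tr _ _ _ _ _ h3); ring.
  split; first by apply: (tr _ _ _ _ _ h2); ring.
  by apply: (tr _ _ _ _ _ h1); ring.
- move=> [h1 [h2 [h3 [h4 [h5 h6]]]]] i j k.
  case: i => [[|[|//]]] ?; case: j => [[|[|//]]] ?; case: k => [[|[|//]]] ?;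
  rewrite !big_ord_recl !big_ord0 /typeA /mx2 !mxE /=;
  first [ apply: (tr _ _ _ _ _ h1); ring | apply: (tr _ _ _ _ _ h2); ring
        | apply: (tr _ _ _ _ _ h3); ring | apply: (tr _ _ _ _ _ h4); ring
        | apply: (tr _ _ _ _ _ h5); ring | apply: (tr _ _ _ _ _ h6); ring ].
Qed.

Lemma iso_mx2 a b c d e f p q r s :
  isotropy (typeA a b c d e f) (mx2 p q r s) <-> (p * s - q * r != 0 /\ eqs a b c d e f p q r s).
Proof.
rewrite /isotropy unit_mx2; split => -[hD H]; split => //.
- by apply/eqsE; apply/key => //; rewrite unit_mx2.
- by apply/key; [rewrite unit_mx2 | apply/eqsE].
Qed.

Lemma subr0E {x y : R} : x - y = 0 -> x = y.
Proof. by move/eqP; rewrite subr_eq0 => /eqP. Qed.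

Lemma case1 p q r s :
  (p * s - q * r != 0 /\ eqs (-1) 0 1 0 0 2 p q r s) <-> mx2 p q r s = 1%:M.
Proof.
rewrite one_mx2 mx2_eq; split.
- move=> [hD [h1 [h2 [h3 [h4 [h5 h6]]]]]].
  have hr : r * (2 * r + 1) = 0 by lra.
  have hs : s * (s - 1) = 0 by lra.
  case: (prod0 hr) => [r0|r1].
  + subst r.
    have p0 : p != 0 by apply/eqP => p0; move/eqP: hD; apply; rewrite p0; ring.
    have s0 : s != 0 by apply/eqP => s0; move/eqP: hD; apply; rewrite s0; ring.
    have : p * (p - 1) = 0 by lra.
    case/prod0 => [/eqP|]; first by rewrite (negbTE p0).
    case: (prod0 hs) => [/eqP|]; first by rewrite (negbTE s0).
    move=> /subr0E s1 /subr0E p1; subst p s.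
    have q0 : q = 0 by lra.
    split; lra.
  + have r0 : r != 0 by apply/eqP => r0; rewrite r0 in r1; lra.
    have : r * (2 * s - 1) = 0 by lra.
    case/prod0 => [/eqP|]; first by rewrite (negbTE r0).
    move=> s1; have s2 : s = 1 / 2 by lra.
    by rewrite s2 in hs; lra.
- case=> -> -> -> ->; split; first by apply/eqP => h; lra.
  rewrite /eqs; do ! split; first [ring | lra].
Qed.
Lemma case2 c p q r s : c != 0 -> c != -1 -> c != - (1 / 2) ->
  (p * s - q * r != 0 /\ eqs (-1) 0 c 0 0 (1 + 2 * c) p q r s) <-> mx2 p q r s = 1%:M.
Proof.
move=> c0 c1 c2.
have F0 : 1 + 2 * c != 0 by apply/eqP => h; move/eqP: c2; apply; lra.
rewrite one_mx2 mx2_eq; split.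
- move=> [hD [h1 [h2 [h3 [h4 [h5 h6]]]]]].
  have hr : r * ((1 + 2 * c) * r + 1) = 0 by lra.
  have : (1 + 2 * c) * (s * (s - 1)) = 0 by lra.
  case/prod0 => [/eqP|hs]; first by rewrite (negbTE F0).
  case: (prod0 hr) => [r0|r1].
  + subst r.
    have p0 : p != 0 by apply/eqP => p0; move/eqP: hD; apply; rewrite p0; ring.
    have s0 : s != 0 by apply/eqP => s0; move/eqP: hD; apply; rewrite s0; ring.
    have : p * (p - 1) = 0 by lra.
    case/prod0 => [/eqP|]; first by rewrite (negbTE p0).
    case: (prod0 hs) => [/eqP|]; first by rewrite (negbTE s0).
    move=> /subr0E s1 /subr0E p1; subst p s.
    have q0 : q = 0 by lra.
    split; lra.
  + have r0 : r != 0 by apply/eqP => r0; rewrite r0 in r1; lra.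
    have : r * ((1 + 2 * c) * s - c) = 0 by lra.
    case/prod0 => [/eqP|]; first by rewrite (negbTE r0).
    move=> hc.
    case: (prod0 hs) => [s0|/subr0E s1]; subst s.
    * by exfalso; move/eqP: c0; apply; lra.
    * by exfalso; move/eqP: c1; apply; lra.
- case=> -> -> -> ->; split; first by apply/eqP => h; lra.
  rewrite /eqs; do ! split; first [ring | lra].
Qed.

Lemma case3 p q r s :
  (p * s - q * r != 0 /\ eqs (-1) 0 (- (1 / 2)) 0 0 (1 + 2 * (- (1 / 2))) p q r s) <->
  (mx2 p q r s = 1%:M \/ mx2 p q r s = mx2 1 1 0 (-1)).
Proof.
rewrite one_mx2 !mx2_eq; split.
- move=> [hD [h1 [h2 [h3 [h4 [h5 h6]]]]]].
  have r0 : r = 0 by lra.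
  subst r.
  have p0 : p != 0 by apply/eqP => p0; move/eqP: hD; apply; rewrite p0; ring.
  have : p * (p - 1) = 0 by lra.
  case/prod0 => [/eqP|/subr0E p1]; first by rewrite (negbTE p0).
  subst p.
  have s1 : s = 1 - 2 * q by lra.
  subst s.
  have : q * (q + (1 - 2 * q)) = 0 by lra.
  case/prod0 => [q0|q1].
  + by left; split; lra.
  + by right; split; lra.
- case=> -[-> -> -> ->]; (split; first by apply/eqP => h; lra);
  rewrite /eqs; do ! split; first [ring | lra].
Qed.

Lemma case4 c p q r s : c != 0 -> c != -1 ->
  (p * s - q * r != 0 /\ eqs 0 0 c 0 0 (1 + 2 * c) p q r s) <->
  (exists v : R, v != 0 /\ mx2 p q r s = mx2 v^-1 0 0 1).
Proof.
move=> c0 c1; split.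
- move=> [hD [h1 [h2 [h3 [h4 [h5 h6]]]]]].
  have : c * (p * r) = 0 by lra.
  case/prod0 => [/eqP|hpr]; first by rewrite (negbTE c0).
  have [p0|p0] := eqVneq p 0.
  + subst p.
    have r0 : r != 0 by apply/eqP => r0; move/eqP: hD; apply; rewrite r0; ring.
    have : ((1 + 2 * c) * r) * r = 0 by lra.
    case/prod0 => [Fr|/eqP]; last by rewrite (negbTE r0).
    have : r * c = ((1 + 2 * c) * r) * s by lra.
    rewrite Fr mul0r => /prod0 [/eqP|/eqP]; first by rewrite (negbTE r0).
    by rewrite (negbTE c0).
  + case: (prod0 hpr) => [/eqP|r0]; first by rewrite (negbTE p0).
    subst r.
    have : c * (p * (s - 1)) = 0 by lra.
    case/prod0 => [/eqP|]; first by rewrite (negbTE c0).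
    case/prod0 => [/eqP|/subr0E s1]; first by rewrite (negbTE p0).
    subst s.
    have q0 : q = 0 by lra.
    exists p^-1; split; first by rewrite invr_eq0.
    by rewrite invrK q0.
- case=> v [v0 /mx2_eq [-> -> -> ->]]; split.
    by rewrite mulr1 mulr0 subr0 invr_eq0.
  rewrite /eqs; do ! split; first [ring | lra].
Qed.

Lemma case5 c p q r s : c != 0 ->
  (p * s - q * r != 0 /\ eqs 0 0 1 0 c 2 p q r s) <->
  (exists w : R, mx2 p q r s = mx2 1 (- w) 0 1).
Proof.
move=> c0; split.
- move=> [hD [h1 [h2 [h3 [h4 [h5 h6]]]]]].
  have rr : r * r = 0 by lra.
  have r0 : r = 0 by case: (prod0 rr).
  subst r.
  have p0 : p != 0 by apply/eqP => p0; move/eqP: hD; apply; rewrite p0; ring.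
  have : p * (s - 1) = 0 by lra.
  case/prod0 => [/eqP|/subr0E s1]; first by rewrite (negbTE p0).
  subst s.
  have : c * (p - 1) = 0 by lra.
  case/prod0 => [/eqP|/subr0E p1]; first by rewrite (negbTE c0).
  subst p.
  by exists (- q); rewrite opprK.
- case=> w /mx2_eq [-> -> -> ->]; split; first by apply/eqP => h; lra.
  rewrite /eqs; do ! split; first [ring | lra].
Qed.

Lemma case6 p q r s :
  (p * s - q * r != 0 /\ eqs 0 0 1 0 0 2 p q r s) <->
  (exists w v : R, v != 0 /\ mx2 p q r s = mx2 v^-1 (- (v^-1 * w)) 0 1).
Proof.
split.
- move=> [hD [h1 [h2 [h3 [h4 [h5 h6]]]]]].
  have rr : r * r = 0 by lra.
  have r0 : r = 0 by case: (prod0 rr).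
  subst r.
  have p0 : p != 0 by apply/eqP => p0; move/eqP: hD; apply; rewrite p0; ring.
  have : p * (s - 1) = 0 by lra.
  case/prod0 => [/eqP|/subr0E s1]; first by rewrite (negbTE p0).
  subst s.
  exists (- (q / p)), p^-1; split; first by rewrite invr_eq0.
  apply/mx2_eq; split => //; first by rewrite invrK.
  by rewrite invrK; field.
- case=> w [v [v0 /mx2_eq [-> -> -> ->]]]; split.
    by rewrite mulr1 mulr0 subr0 invr_eq0.
  rewrite /eqs; do ! split; first [ring | lra].
Qed.

Lemma case7 c p q r s : c != 0 ->
  (p * s - q * r != 0 /\ eqs 1 0 0 0 (1 + c ^+ 2) (2 * c) p q r s) <-> mx2 p q r s = 1%:M.
Proof.
move=> c0; rewrite one_mx2 mx2_eq; split.
- move=> [hD [h1 [h2 [h3 [h4 [h5 h6]]]]]].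
  have : c * (r * s) = 0 by lra.
  case/prod0 => [/eqP|hrs]; first by rewrite (negbTE c0).
  have [r0|r0] := eqVneq r 0.
  + subst r.
    have p0 : p != 0 by apply/eqP => p0; move/eqP: hD; apply; rewrite p0; ring.
    have s0 : s != 0 by apply/eqP => s0; move/eqP: hD; apply; rewrite s0; ring.
    have : p * (p - 1) = 0 by lra.
    case/prod0 => [/eqP|/subr0E p1]; first by rewrite (negbTE p0).
    subst p.
    have q0 : q = 0 by lra.
    have : c * (s * (s - 1)) = 0 by lra.
    case/prod0 => [/eqP|]; first by rewrite (negbTE c0).
    case/prod0 => [/eqP|/subr0E s1]; first by rewrite (negbTE s0).
    split; lra.
  + case: (prod0 hrs) => [/eqP|s0]; first by rewrite (negbTE r0).
    subst s.
    have : r * (1 + c ^+ 2) = 0 by lra.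
    case/prod0 => [/eqP|h]; first by rewrite (negbTE r0).
    exfalso; nra.
- case=> -> -> -> ->; split; first by apply/eqP => h; lra.
  rewrite /eqs; do ! split; first [ring | lra].
Qed.

Lemma case8 p q r s :
  (p * s - q * r != 0 /\ eqs 1 0 0 0 (1 + 0 ^+ 2) (2 * 0) p q r s) <->
  (mx2 p q r s = 1%:M \/ mx2 p q r s = mx2 1 0 0 (-1)).
Proof.
rewrite one_mx2 !mx2_eq; split.
- move=> [hD [h1 [h2 [h3 [h4 [h5 h6]]]]]].
  have r0 : r = 0 by lra.
  subst r.
  have p0 : p != 0 by apply/eqP => p0; move/eqP: hD; apply; rewrite p0; ring.
  have : p * (p - 1) = 0 by lra.
  case/prod0 => [/eqP|/subr0E p1]; first by rewrite (negbTE p0).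
  subst p.
  have q0 : q = 0 by lra.
  subst q.
  have : (s - 1) * (s + 1) = 0 by lra.
  case/prod0 => [s1|s1].
  + by left; split; lra.
  + by right; split; lra.
- case=> -[-> -> -> ->]; (split; first by apply/eqP => h; lra);
  rewrite /eqs; do ! split; first [ring | lra].
Qed.

End Aux.

Theorem lemma4p2 (R : realType) :
  (* (1) *)
  (forall A : 'M[R]_2,
     isotropy (typeA (-1) 0 1 0 0 2) A <-> A = 1%:M) /\
  (* (2) *)
  (forall c1 : R, c1 != 0 -> c1 != -1 -> c1 != - (1 / 2) ->
   forall A : 'M[R]_2,
     isotropy (typeA (-1) 0 c1 0 0 (1 + 2 * c1)) A <-> A = 1%:M) /\
  (* (3) *)
  (forall A : 'M[R]_2,
     isotropy (typeA (-1) 0 (- (1 / 2)) 0 0 (1 + 2 * (- (1 / 2)))) A <->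
     (A = 1%:M \/ A = mx2 1 1 0 (-1))) /\
  (* (4) *)
  (forall c1 : R, c1 != 0 -> c1 != -1 ->
   forall A : 'M[R]_2,
     isotropy (typeA 0 0 c1 0 0 (1 + 2 * c1)) A <->
     (exists v : R, v != 0 /\ A = mx2 v^-1 0 0 1)) /\
  (* (5) *)
  (forall c : R, c != 0 ->
   forall A : 'M[R]_2,
     isotropy (typeA 0 0 1 0 c 2) A <->
     (exists w : R, A = mx2 1 (- w) 0 1)) /\
  (* (6) *)
  (forall A : 'M[R]_2,
     isotropy (typeA 0 0 1 0 0 2) A <->
     (exists w v : R, v != 0 /\ A = mx2 v^-1 (- (v^-1 * w)) 0 1)) /\
  (* (7) *)
  (forall c : R, c != 0 ->
   forall A : 'M[R]_2,
     isotropy (typeA 1 0 0 0 (1 + c ^+ 2) (2 * c)) A <-> A = 1%:M) /\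
  (* (8) *)
  (forall A : 'M[R]_2,
     isotropy (typeA 1 0 0 0 (1 + 0 ^+ 2) (2 * 0)) A <->
     (A = 1%:M \/ A = mx2 1 0 0 (-1))).
Proof.
split; [|split; [|split; [|split; [|split; [|split; [|split]]]]]].
- by move=> A; have E := @mx2_eta R A;
    move: (A 0 0) (A 0 1) (A 1 0) (A 1 1) E => p q r s ->;
    rewrite iso_mx2; exact: case1.
- by move=> c1 h1 h2 h3 A; have E := @mx2_eta R A;
    move: (A 0 0) (A 0 1) (A 1 0) (A 1 1) E => p q r s ->;
    rewrite iso_mx2; exact: case2.
- by move=> A; have E := @mx2_eta R A;
    move: (A 0 0) (A 0 1) (A 1 0) (A 1 1) E => p q r s ->;
    rewrite iso_mx2; exact: case3.
- by move=> c1 h1 h2 A; have E := @mx2_eta R A;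
    move: (A 0 0) (A 0 1) (A 1 0) (A 1 1) E => p q r s ->;
    rewrite iso_mx2; exact: case4.
- by move=> c h A; have E := @mx2_eta R A;
    move: (A 0 0) (A 0 1) (A 1 0) (A 1 1) E => p q r s ->;
    rewrite iso_mx2; exact: case5.
- by move=> A; have E := @mx2_eta R A;
    move: (A 0 0) (A 0 1) (A 1 0) (A 1 1) E => p q r s ->;
    rewrite iso_mx2; exact: case6.
- by move=> c h A; have E := @mx2_eta R A;
    move: (A 0 0) (A 0 1) (A 1 0) (A 1 1) E => p q r s ->;
    rewrite iso_mx2; exact: case7.
- by move=> A; have E := @mx2_eta R A;
    move: (A 0 0) (A 0 1) (A 1 0) (A 1 1) E => p q r s ->;
    rewrite iso_mx2; exact: case8.
Qed.
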